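(* Let $(M,g,J)$ be a Kaehler manifold. The following are equivalent: (a) $M$ is semisymmetric, i.e. $R\cdot R=0$; (b) $R\cdot R(u,v,v,u;x,Jx)=0$ for every $p\in M$ and all $x,u,v\in T_pM$; (c) $R\cdot R(u,Ju,Ju,u;x,y)=0$ for every $p\in M$ and all $x,y,u\in T_pM$; (d) $R\cdot R(u,Ju,Ju,u;x,Jx)=0$ for every $p\in M$ and all $x,u\in T_pM$.
   Context: A Kaehler manifold $(M,g,J)$: $J^2=-\mathrm{Id}$, $g(JX,JY)=g(X,Y)$, $\nabla J=0$ for the Levi-Civita connection. Curvature: $R(X,Y)Z=\nabla_X\nabla_YZ-\nabla_Y\nabla_XZ-\nabla_{[X,Y]}Z$, $R(X,Y,Z,W)=g(R(X,Y)Z,W)$. The $(0,6)$-tensor $R\cdot R$ is $R\cdot R(X_1,X_2,X_3,X_4;X,Y)=-R(R(X,Y)X_1,X_2,X_3,X_4)-R(X_1,R(X,Y)X_2,X_3,X_4)-R(X_1,X_2,R(X,Y)X_3,X_4)-R(X_1,X_2,X_3,R(X,Y)X_4)$. *)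

(* Defs.v *)
(* Pointwise (tangent-space) algebraic model of the curvature
   of a Kaehler manifold. *)
From HB Require Import structures.
From mathcomp Require Import all_boot all_order all_algebra.
From mathcomp Require Import reals.
Set Implicit Arguments. Unset Strict Implicit. Unset Printing Implicit Defensive.
Import Order.TTheory GRing.Theory Num.Theory.
Local Open Scope ring_scope.

Section KaehlerPoint.
Variables (R : realType) (n : nat).
Local Notation V := 'rV[R]_n.

Definition riemannian_metric (g : V -> V -> R) : Prop :=
  [/\ forall a x y z, g (a *: x + y) z = a * g x z + g y z,
      forall x y, g x y = g y x &
      forall x, x != 0 -> 0 < g x x].

Definition almost_hermitian (g : V -> V -> R) (J : V -> V) : Prop :=
  [/\ forall a x y, J (a *: x + y) = a *: J x + J y,
      forall x, J (J x) = - x &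
      forall x y, g (J x) (J y) = g x y].

(* Rc X Y Z = R(X,Y)Z : the curvature operator at p of the Levi-Civita
   connection of a Kaehler metric.  Pointwise it is trilinear, skew in (X,Y),
   each R(X,Y) is g-skew-adjoint, it satisfies the first Bianchi identity,
   and (from nabla J = 0) each R(X,Y) commutes with J. *)
Definition kaehler_curvature (g : V -> V -> R) (J : V -> V)
    (Rc : V -> V -> V -> V) : Prop :=
  [/\ forall a x x' y z, Rc (a *: x + x') y z = a *: Rc x y z + Rc x' y z,
      forall a x y y' z, Rc x (a *: y + y') z = a *: Rc x y z + Rc x y' z &
      forall a x y z z', Rc x y (a *: z + z') = a *: Rc x y z + Rc x y z'] /\
  [/\ forall x y z, Rc x y z = - Rc y x z,
      forall x y z w, g (Rc x y z) w = - g (Rc x y w) z,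
      forall x y z, Rc x y z + Rc y z x + Rc z x y = 0 &
      forall x y z, Rc x y (J z) = J (Rc x y z)].

Definition curv4 (g : V -> V -> R) (Rc : V -> V -> V -> V) (x y z w : V) : R :=
  g (Rc x y z) w.

Definition RdotR (g : V -> V -> R) (Rc : V -> V -> V -> V)
    (x1 x2 x3 x4 x y : V) : R :=
  - curv4 g Rc (Rc x y x1) x2 x3 x4
  - curv4 g Rc x1 (Rc x y x2) x3 x4
  - curv4 g Rc x1 x2 (Rc x y x3) x4
  - curv4 g Rc x1 x2 x3 (Rc x y x4).

End KaehlerPoint.

(* Main.v *)
Require Import Defs.
From HB Require Import structures.
From mathcomp Require Import all_boot all_order all_algebra.
From mathcomp Require Import reals lra.
Import Order.TTheory GRing.Theory Num.Theory.
Local Open Scope ring_scope.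

Section PS.
Variables (R : realType) (V : Type) (T : V -> V -> V -> V -> R).
Hypothesis s12 : forall x y z w, T x y z w = - T y x z w.
Hypothesis s34 : forall x y z w, T x y z w = - T x y w z.
Hypothesis bi : forall x y z w, T x y z w + T y z x w + T z x y w = 0.
Lemma pairsym x y z w : T x y z w = T z w x y.
Proof.
move: (bi (x) (z) (w) (y)) => ?.
move: (s34 (x) (z) (y) (w)) => ?.
move: (s12 (x) (z) (y) (w)) => ?.
move: (s12 (x) (w) (z) (y)) => ?.
move: (s34 (x) (w) (y) (z)) => ?.
move: (s12 (x) (w) (y) (z)) => ?.
move: (s34 (z) (w) (x) (y)) => ?.
move: (bi (y) (z) (w) (x)) => ?.
move: (s34 (y) (z) (x) (w)) => ?.
move: (bi (x) (y) (z) (w)) => ?.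
move: (s12 (y) (w) (z) (x)) => ?.
move: (s34 (y) (w) (x) (z)) => ?.
move: (bi (x) (y) (w) (z)) => ?.
move: (s34 (x) (y) (z) (w)) => ?.
lra.
Qed.
End PS.
Arguments pairsym {R V T}.

Section Lin.
Variables (R : realType) (V W : lmodType R) (f : V -> W).
Hypothesis hf : forall a x y, f (a *: x + y) = a *: f x + f y.
Lemma lin_add x y : f (x + y) = f x + f y.
Proof. by have := hf 1 x y; rewrite !scale1r. Qed.
Lemma lin0 : f 0 = 0.
Proof. by have := hf (-1) 0 0; rewrite scaler0 addr0 scaleN1r addNr. Qed.
Lemma lin_opp x : f (- x) = - f x.
Proof. by have := hf (-1) x 0; rewrite addr0 !scaleN1r lin0 addr0. Qed.
End Lin.
Arguments lin_add {R V W f} hf x y.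
Arguments lin0 {R V W f} hf.
Arguments lin_opp {R V W f} hf x.
Section Abs.
Variables (R : realType) (V : lmodType R) (T : V -> V -> V -> V -> R).
Hypothesis s12 : forall x y z w, T x y z w = - T y x z w.
Hypothesis s34 : forall x y z w, T x y z w = - T x y w z.
Hypothesis bi : forall x y z w, T x y z w + T y z x w + T z x y w = 0.
Hypothesis TD1 : forall x x' y z w, T (x + x') y z w = T x y z w + T x' y z w.
Hypothesis TD2 : forall x y y' z w, T x (y + y') z w = T x y z w + T x y' z w.
Hypothesis TD3 : forall x y z z' w, T x y (z + z') w = T x y z w + T x y z' w.
Hypothesis TD4 : forall x y z w w', T x y z (w + w') = T x y z w + T x y z w'.
Hypothesis TN1 : forall x y z w, T (- x) y z w = - T x y z w.
Hypothesis TN2 : forall x y z w, T x (- y) z w = - T x y z w.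
Hypothesis TN3 : forall x y z w, T x y (- z) w = - T x y z w.
Hypothesis TN4 : forall x y z w, T x y z (- w) = - T x y z w.

Lemma lemB (HK : forall x y, T x y y x = 0) x y z w : T x y z w = 0.
Proof.
move: (HK (x + z) (w + y)); rewrite ?TD1 ?TD2 ?TD3 ?TD4 ?TN1 ?TN2 ?TN3 ?TN4 ?opprK => ?.
move: (s34 (x) (y) (x) (y)) => ?.
move: (bi (x) (x) (y) (y)) => ?.
move: (s12 (x) (x) (y) (y)) => ?.
move: (s34 (x) (y) (z) (w)) => ?.
move: (s12 (x) (w) (y) (z)) => ?.
move: (s34 (x) (w) (x) (w)) => ?.
move: (bi (x) (x) (w) (w)) => ?.
move: (s12 (x) (x) (w) (w)) => ?.
move: (s34 (x) (w) (z) (w)) => ?.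
move: (HK (y) (x + z)); rewrite ?TD1 ?TD2 ?TD3 ?TD4 ?TN1 ?TN2 ?TN3 ?TN4 ?opprK => ?.
move: (HK (x) (y)); rewrite ?TD1 ?TD2 ?TD3 ?TD4 ?TN1 ?TN2 ?TN3 ?TN4 ?opprK => ?.
move: (s12 (x) (y) (z) (y)) => ?.
move: (HK (y) (z)); rewrite ?TD1 ?TD2 ?TD3 ?TD4 ?TN1 ?TN2 ?TN3 ?TN4 ?opprK => ?.
move: (s34 (y) (z) (y) (z)) => ?.
move: (bi (y) (y) (z) (z)) => ?.
move: (s12 (y) (y) (z) (z)) => ?.
move: (s12 (y) (z) (w) (x)) => ?.
move: (s34 (y) (z) (x) (w)) => ?.
move: (bi (x) (y) (z) (w)) => ?.
move: (bi (y) (z) (w) (x)) => ?.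
move: (s34 (z) (w) (x) (w)) => ?.
move: (bi (x) (z) (w) (w)) => ?.
move: (s34 (z) (w) (z) (w)) => ?.
move: (bi (z) (z) (w) (w)) => ?.
move: (s12 (z) (z) (w) (w)) => ?.
move: (s34 (x) (y) (y) (z)) => ?.
move: (HK (x) (w + y)); rewrite ?TD1 ?TD2 ?TD3 ?TD4 ?TN1 ?TN2 ?TN3 ?TN4 ?opprK => ?.
move: (HK (x) (w)); rewrite ?TD1 ?TD2 ?TD3 ?TD4 ?TN1 ?TN2 ?TN3 ?TN4 ?opprK => ?.
move: (HK (x + y) (w + z)); rewrite ?TD1 ?TD2 ?TD3 ?TD4 ?TN1 ?TN2 ?TN3 ?TN4 ?opprK => ?.
move: (s34 (x) (z) (y) (z)) => ?.
move: (s34 (x) (w) (y) (w)) => ?.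
move: (s34 (y) (z) (x) (z)) => ?.
move: (bi (x) (y) (z) (z)) => ?.
move: (s34 (y) (w) (x) (z)) => ?.
move: (bi (x) (y) (w) (z)) => ?.
move: (s34 (y) (w) (x) (w)) => ?.
move: (bi (x) (y) (w) (w)) => ?.
move: (s34 (y) (w) (y) (w)) => ?.
move: (bi (y) (y) (w) (w)) => ?.
move: (s12 (y) (y) (w) (w)) => ?.
move: (HK (z) (x + y)); rewrite ?TD1 ?TD2 ?TD3 ?TD4 ?TN1 ?TN2 ?TN3 ?TN4 ?opprK => ?.
move: (s34 (x) (z) (x) (z)) => ?.
move: (bi (x) (x) (z) (z)) => ?.
move: (s12 (x) (x) (z) (z)) => ?.
move: (bi (x) (z) (y) (z)) => ?.
move: (s12 (x) (y) (z) (z)) => ?.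
move: (s34 (z) (w) (x) (y)) => ?.
move: (bi (x) (z) (w) (y)) => ?.
move: (s12 (x) (w) (z) (y)) => ?.
move: (s12 (y) (w) (z) (x)) => ?.
move: (HK (x) (w + z)); rewrite ?TD1 ?TD2 ?TD3 ?TD4 ?TN1 ?TN2 ?TN3 ?TN4 ?opprK => ?.
move: (HK (x) (z)); rewrite ?TD1 ?TD2 ?TD3 ?TD4 ?TN1 ?TN2 ?TN3 ?TN4 ?opprK => ?.
move: (HK (w) (x + y)); rewrite ?TD1 ?TD2 ?TD3 ?TD4 ?TN1 ?TN2 ?TN3 ?TN4 ?opprK => ?.
move: (bi (x) (w) (y) (w)) => ?.
move: (s12 (x) (y) (w) (w)) => ?.
move: (HK (y) (w)); rewrite ?TD1 ?TD2 ?TD3 ?TD4 ?TN1 ?TN2 ?TN3 ?TN4 ?opprK => ?.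
move: (HK (y) (w + z)); rewrite ?TD1 ?TD2 ?TD3 ?TD4 ?TN1 ?TN2 ?TN3 ?TN4 ?opprK => ?.
move: (HK (w) (x + z)); rewrite ?TD1 ?TD2 ?TD3 ?TD4 ?TN1 ?TN2 ?TN3 ?TN4 ?opprK => ?.
move: (bi (x) (w) (z) (w)) => ?.
move: (s12 (x) (z) (w) (w)) => ?.
move: (s34 (x) (z) (y) (w)) => ?.
move: (s12 (x) (z) (y) (w)) => ?.
move: (s12 (x) (y) (y) (z)) => ?.
move: (s34 (y) (z) (x) (y)) => ?.
move: (bi (y) (y) (z) (x)) => ?.
move: (s34 (y) (y) (x) (z)) => ?.
move: (bi (x) (y) (y) (z)) => ?.
move: (HK (z) (w + y)); rewrite ?TD1 ?TD2 ?TD3 ?TD4 ?TN1 ?TN2 ?TN3 ?TN4 ?opprK => ?.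
move: (HK (z) (w)); rewrite ?TD1 ?TD2 ?TD3 ?TD4 ?TN1 ?TN2 ?TN3 ?TN4 ?opprK => ?.
lra.
Qed.

Variable J : V -> V.
Hypothesis JD : forall x y, J (x + y) = J x + J y.
Hypothesis JN : forall x, J (- x) = - J x.
Hypothesis JJ : forall x, J (J x) = - x.
Hypothesis TJ : forall x y z w, T x y (J z) (J w) = T x y z w.

Lemma lemC (HQ : forall u, T u (J u) (J u) u = 0) u v : T u v v u = 0.
Proof.
move: (s34 (u) (v) (u) (v)) => ?.
move: (HQ (u - (J v))); rewrite ?JD ?JN ?JJ ?opprK ?TD1 ?TD2 ?TD3 ?TD4 ?TN1 ?TN2 ?TN3 ?TN4 ?opprK => ?.
move: (s12 (u) ((J u)) (v) ((J v))) => ?.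
move: (TJ (u) (v) (u) (v)); rewrite ?JJ ?TN3 ?TN4 ?opprK => ?.
move: (HQ (u + (J v))); rewrite ?JD ?JN ?JJ ?opprK ?TD1 ?TD2 ?TD3 ?TD4 ?TN1 ?TN2 ?TN3 ?TN4 ?opprK => ?.
move: (TJ ((J u)) ((J v)) (u) (v)); rewrite ?JJ ?TN3 ?TN4 ?opprK => ?.
move: (bi ((J u)) ((J u)) ((J v)) ((J v))) => ?.
move: (TJ ((J u)) ((J u)) (v) (v)); rewrite ?JJ ?TN3 ?TN4 ?opprK => ?.
move: (bi (v) ((J u)) ((J u)) (v)) => ?.
move: (s12 (v) ((J u)) ((J u)) (v)) => ?.
move: (bi (u) ((J u)) ((J v)) (v)) => ?.
move: (s34 (u) ((J u)) (v) ((J v))) => ?.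
move: (s12 (u) ((J v)) ((J u)) (v)) => ?.
move: (s34 (v) ((J u)) (u) ((J v))) => ?.
move: (bi (u) (v) ((J u)) ((J v))) => ?.
move: (s12 (v) ((J v)) ((J u)) (u)) => ?.
move: (s34 (v) ((J v)) (u) ((J u))) => ?.
move: (bi (u) (v) ((J v)) ((J u))) => ?.
move: (TJ (u) (v) (v) (u)); rewrite ?JJ ?TN3 ?TN4 ?opprK => ?.
move: (s34 (u) ((J v)) (v) ((J u))) => ?.
move: (s12 (u) ((J v)) (v) ((J u))) => ?.
move: (bi (v) ((J v)) ((J u)) (u)) => ?.
move: (TJ (u) ((J v)) (u) ((J v))); rewrite ?JJ ?TN3 ?TN4 ?opprK => ?.
move: (s12 (v) ((J u)) ((J v)) (u)) => ?.
move: (HQ (v)); rewrite ?JD ?JN ?JJ ?opprK ?TD1 ?TD2 ?TD3 ?TD4 ?TN1 ?TN2 ?TN3 ?TN4 ?opprK => ?.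
move: (s34 (v) ((J v)) (v) ((J v))) => ?.
move: (bi (v) (v) ((J v)) ((J v))) => ?.
move: (TJ (v) (v) (v) (v)); rewrite ?JJ ?TN3 ?TN4 ?opprK => ?.
move: (s12 (v) (v) (v) (v)) => ?.
move: (HQ (u)); rewrite ?JD ?JN ?JJ ?opprK ?TD1 ?TD2 ?TD3 ?TD4 ?TN1 ?TN2 ?TN3 ?TN4 ?opprK => ?.
move: (HQ (u - v)); rewrite ?JD ?JN ?JJ ?opprK ?TD1 ?TD2 ?TD3 ?TD4 ?TN1 ?TN2 ?TN3 ?TN4 ?opprK => ?.
move: (s34 (u) ((J v)) (u) ((J v))) => ?.
move: (TJ (v) ((J u)) (u) ((J v))); rewrite ?JJ ?TN3 ?TN4 ?opprK => ?.
move: (HQ (u + v)); rewrite ?JD ?JN ?JJ ?opprK ?TD1 ?TD2 ?TD3 ?TD4 ?TN1 ?TN2 ?TN3 ?TN4 ?opprK => ?.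
lra.
Qed.
End Abs.
Arguments lemB {R V T}.
Arguments lemC {R V T}.

Section Main.
Variables (R : realType) (n : nat) (g : 'rV[R]_n -> 'rV[R]_n -> R)
    (J : 'rV[R]_n -> 'rV[R]_n)
    (Rc : 'rV[R]_n -> 'rV[R]_n -> 'rV[R]_n -> 'rV[R]_n).
Hypothesis Hg : riemannian_metric g.
Hypothesis HJ : almost_hermitian g J.
Hypothesis HR : kaehler_curvature g J Rc.

Let gL : forall a x y z, g (a *: x + y) z = a * g x z + g y z.
Proof. by case: Hg. Qed.
Let gS : forall x y, g x y = g y x.
Proof. by case: Hg. Qed.
Let gP : forall x, x != 0 -> 0 < g x x.
Proof. by case: Hg. Qed.
Let g0 z : g 0 z = 0.
Proof. have := gL (-1) 0 0 z; rewrite scaler0 addr0; lra. Qed.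
Let gD1 x y z : g (x + y) z = g x z + g y z.
Proof. by have := gL 1 x y z; rewrite scale1r mul1r. Qed.
Let gN1 x z : g (- x) z = - g x z.
Proof. have := gL (-1) x 0 z; rewrite addr0 scaleN1r g0; lra. Qed.
Let gD2 x y z : g z (x + y) = g z x + g z y.
Proof. by rewrite gS gD1 !(gS z). Qed.
Let gN2 x z : g z (- x) = - g z x.
Proof. by rewrite gS gN1 gS. Qed.
Let JL : forall a x y, J (a *: x + y) = a *: J x + J y.
Proof. by case: HJ. Qed.
Let JJ : forall x, J (J x) = - x.
Proof. by case: HJ. Qed.
Let gJ : forall x y, g (J x) (J y) = g x y.
Proof. by case: HJ. Qed.
Let JD x y : J (x + y) = J x + J y.
Proof. exact: (lin_add JL). Qed.
Let JN x : J (- x) = - J x.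
Proof. exact: (lin_opp JL). Qed.
Let RL1 : forall a x x' y z, Rc (a *: x + x') y z = a *: Rc x y z + Rc x' y z.
Proof. by case: HR => -[]. Qed.
Let RL2 : forall a x y y' z, Rc x (a *: y + y') z = a *: Rc x y z + Rc x y' z.
Proof. by case: HR => -[]. Qed.
Let RL3 : forall a x y z z', Rc x y (a *: z + z') = a *: Rc x y z + Rc x y z'.
Proof. by case: HR => -[]. Qed.
Let Rsk : forall x y z, Rc x y z = - Rc y x z.
Proof. by case: HR => _ []. Qed.
Let Rsa : forall x y z w, g (Rc x y z) w = - g (Rc x y w) z.
Proof. by case: HR => _ []. Qed.
Let Rbi : forall x y z, Rc x y z + Rc y z x + Rc z x y = 0.
Proof. by case: HR => _ []. Qed.
Let RJ : forall x y z, Rc x y (J z) = J (Rc x y z).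
Proof. by case: HR => _ []. Qed.
Let RD1 x x' y z : Rc (x + x') y z = Rc x y z + Rc x' y z.
Proof. exact: (lin_add (f := fun x => Rc x y z) (fun a x x' => RL1 a x x' y z)). Qed.
Let RD2 x y y' z : Rc x (y + y') z = Rc x y z + Rc x y' z.
Proof. exact: (lin_add (f := fun y => Rc x y z) (fun a y y' => RL2 a x y y' z)). Qed.
Let RD3 x y z z' : Rc x y (z + z') = Rc x y z + Rc x y z'.
Proof. exact: (lin_add (f := fun z => Rc x y z) (fun a z z' => RL3 a x y z z')). Qed.
Let RN1 x y z : Rc (- x) y z = - Rc x y z.
Proof. exact: (lin_opp (f := fun x => Rc x y z) (fun a x x' => RL1 a x x' y z)). Qed.
Let RN2 x y z : Rc x (- y) z = - Rc x y z.
Proof. exact: (lin_opp (f := fun y => Rc x y z) (fun a y y' => RL2 a x y y' z)). Qed.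
Let RN3 x y z : Rc x y (- z) = - Rc x y z.
Proof. exact: (lin_opp (f := fun z => Rc x y z) (fun a z z' => RL3 a x y z z')). Qed.

Let c4ps x y z w : curv4 g Rc x y z w = curv4 g Rc z w x y.
Proof.
apply: pairsym => {x y z w} x y z w; rewrite /curv4.
- by rewrite Rsk gN1.
- by rewrite Rsa.
- by rewrite -!gD1 Rbi g0.
Qed.

Let RJJ x y z : Rc (J x) (J y) z = Rc x y z.
Proof.
have h w : g (Rc (J x) (J y) z - Rc x y z) w = 0.
  rewrite gD1 gN1.
  have -> : g (Rc (J x) (J y) z) w = g (Rc x y z) w.
    rewrite -[LHS]/(curv4 g Rc _ _ _ _) c4ps /curv4 RJ gJ.
    by rewrite -[LHS]/(curv4 g Rc _ _ _ _) c4ps.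
  by rewrite subrr.
apply/eqP; rewrite -subr_eq0; apply/eqP.
set v := _ - _ in h *.
case: (eqVneq v 0) => // /gP; by rewrite h ltxx.
Qed.

Section Fixed.
Variables x y : 'rV[R]_n.
Let T x1 x2 x3 x4 := RdotR g Rc x1 x2 x3 x4 x y.
Let D := Rc x y.
Let Ts12 x1 x2 x3 x4 : T x1 x2 x3 x4 = - T x2 x1 x3 x4.
Proof.
rewrite /T /RdotR /curv4.
rewrite (Rsk (Rc x y x2) x1) (Rsk x2 (Rc x y x1)) (Rsk x2 x1 (Rc x y x3)) (Rsk x2 x1 x3) !gN1.
lra.
Qed.
Let Ts34 x1 x2 x3 x4 : T x1 x2 x3 x4 = - T x1 x2 x4 x3.
Proof.
rewrite /T /RdotR /curv4.
rewrite (Rsa (Rc x y x1) x2 x4 x3) (Rsa x1 (Rc x y x2) x4 x3) (Rsa x1 x2 (Rc x y x4) x3) (Rsa x1 x2 x4 (Rc x y x3)).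
lra.
Qed.
Let Tbi x1 x2 x3 x4 : T x1 x2 x3 x4 + T x2 x3 x1 x4 + T x3 x1 x2 x4 = 0.
Proof.
rewrite /T /RdotR /curv4.
have h1 : g (Rc (Rc x y x1) x2 x3) x4 + g (Rc x2 x3 (Rc x y x1)) x4 + g (Rc x3 (Rc x y x1) x2) x4 = 0.
  by rewrite -!gD1 Rbi g0.
have h2 : g (Rc (Rc x y x2) x3 x1) x4 + g (Rc x3 x1 (Rc x y x2)) x4 + g (Rc x1 (Rc x y x2) x3) x4 = 0.
  by rewrite -!gD1 Rbi g0.
have h3 : g (Rc (Rc x y x3) x1 x2) x4 + g (Rc x1 x2 (Rc x y x3)) x4 + g (Rc x2 (Rc x y x3) x1) x4 = 0.
  by rewrite -!gD1 Rbi g0.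
have h4 : g (Rc x1 x2 x3) (Rc x y x4) + g (Rc x2 x3 x1) (Rc x y x4) + g (Rc x3 x1 x2) (Rc x y x4) = 0.
  by rewrite -!gD1 Rbi g0.
lra.
Qed.
Let TD1 x1 x1' x2 x3 x4 : T (x1 + x1') x2 x3 x4 = T x1 x2 x3 x4 + T x1' x2 x3 x4.
Proof. rewrite /T /RdotR /curv4; do 3 rewrite ?RD1 ?RD2 ?RD3 ?gD1 ?gD2; lra. Qed.
Let TD2 x1 x2 x2' x3 x4 : T x1 (x2 + x2') x3 x4 = T x1 x2 x3 x4 + T x1 x2' x3 x4.
Proof. rewrite /T /RdotR /curv4; do 3 rewrite ?RD1 ?RD2 ?RD3 ?gD1 ?gD2; lra. Qed.
Let TD3 x1 x2 x3 x3' x4 : T x1 x2 (x3 + x3') x4 = T x1 x2 x3 x4 + T x1 x2 x3' x4.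
Proof. rewrite /T /RdotR /curv4; do 3 rewrite ?RD1 ?RD2 ?RD3 ?gD1 ?gD2; lra. Qed.
Let TD4 x1 x2 x3 x4 x4' : T x1 x2 x3 (x4 + x4') = T x1 x2 x3 x4 + T x1 x2 x3 x4'.
Proof. rewrite /T /RdotR /curv4; do 3 rewrite ?RD1 ?RD2 ?RD3 ?gD1 ?gD2; lra. Qed.
Let TN1 x1 x2 x3 x4 : T (- x1) x2 x3 x4 = - T x1 x2 x3 x4.
Proof. rewrite /T /RdotR /curv4; do 3 rewrite ?RN1 ?RN2 ?RN3 ?gN1 ?gN2; lra. Qed.
Let TN2 x1 x2 x3 x4 : T x1 (- x2) x3 x4 = - T x1 x2 x3 x4.
Proof. rewrite /T /RdotR /curv4; do 3 rewrite ?RN1 ?RN2 ?RN3 ?gN1 ?gN2; lra. Qed.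
Let TN3 x1 x2 x3 x4 : T x1 x2 (- x3) x4 = - T x1 x2 x3 x4.
Proof. rewrite /T /RdotR /curv4; do 3 rewrite ?RN1 ?RN2 ?RN3 ?gN1 ?gN2; lra. Qed.
Let TN4 x1 x2 x3 x4 : T x1 x2 x3 (- x4) = - T x1 x2 x3 x4.
Proof. rewrite /T /RdotR /curv4; do 3 rewrite ?RN1 ?RN2 ?RN3 ?gN1 ?gN2; lra. Qed.
Let TJ x1 x2 x3 x4 : T x1 x2 (J x3) (J x4) = T x1 x2 x3 x4.
Proof. by rewrite /T /RdotR /curv4 !RJ !gJ. Qed.

Lemma fixedB : (forall u v, T u v v u = 0) -> forall x1 x2 x3 x4, T x1 x2 x3 x4 = 0.
Proof. move=> HK x1 x2 x3 x4; exact: (lemB Ts12 Ts34 Tbi TD1 TD2 TD3 TD4 HK). Qed.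
Lemma fixedC : (forall u, T u (J u) (J u) u = 0) -> forall u v, T u v v u = 0.
Proof. move=> HQ u v; exact: (lemC Ts12 Ts34 Tbi TD1 TD2 TD3 TD4 TN1 TN2 TN3 TN4 J JD JN JJ TJ HQ). Qed.
End Fixed.

Lemma polar x1 x2 x3 x4 :
  (forall x, RdotR g Rc x1 x2 x3 x4 x (J x) = 0) ->
  forall x y, RdotR g Rc x1 x2 x3 x4 x y = 0.
Proof.
move=> H x y.
pose F x y := RdotR g Rc x1 x2 x3 x4 x y.
have FD1 a b c : F (a + b) c = F a c + F b c.
  rewrite /F /RdotR /curv4; do 3 rewrite ?RD1 ?RD2 ?RD3 ?gD1 ?gD2; lra.
have FD2 a b c : F c (a + b) = F c a + F c b.
  rewrite /F /RdotR /curv4; do 3 rewrite ?RD1 ?RD2 ?RD3 ?gD1 ?gD2; lra.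
have FN2 a c : F c (- a) = - F c a.
  rewrite /F /RdotR /curv4; do 3 rewrite ?RN1 ?RN2 ?RN3 ?gN1 ?gN2; lra.
have Fsk a b : F a b = - F b a.
  rewrite /F /RdotR /curv4 !(Rsk b a); do 3 rewrite ?RN1 ?RN2 ?RN3 ?gN1 ?gN2; lra.
have FJ a b : F (J a) (J b) = F a b by rewrite /F /RdotR /curv4 !RJJ.
have h1 := H (x + J y).
rewrite JD JJ -/(F _ _) FD1 !FD2 !FN2 in h1.
have h2 := H x; have h3 := H (J y); rewrite JJ -/(F _ _) FN2 in h3.
have h4 := FJ y x. have h5 := Fsk x y.
rewrite -/(F _ _) in h2.
rewrite -/(F x y). lra.
Qed.

Theorem main_sec :
  let a := forall x1 x2 x3 x4 x y, RdotR g Rc x1 x2 x3 x4 x y = 0 in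
  let b := forall x u v, RdotR g Rc u v v u x (J x) = 0 in
  let c := forall x y u, RdotR g Rc u (J u) (J u) u x y = 0 in
  let d := forall x u, RdotR g Rc u (J u) (J u) u x (J x) = 0 in
  [/\ a <-> b, a <-> c & a <-> d].
Proof.
move=> a b c d; rewrite /a /b /c /d.
split; split.
- by move=> Ha x u v; apply: Ha.
- move=> Hb x1 x2 x3 x4; apply: polar => x.
  by apply: (fixedB x (J x)) => u v; apply: Hb.
- by move=> Ha x y u; apply: Ha.
- move=> Hc x1 x2 x3 x4 x y.
  apply: (fixedB x y); apply: fixedC => u; apply: Hc.
- by move=> Ha x u; apply: Ha.
- move=> Hd x1 x2 x3 x4; apply: polar => x.
  apply: (fixedB x (J x)); apply: fixedC => u; apply: Hd.
Qed.
End Main.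

Theorem mainTheorem9 (R : realType) (n : nat) (g : 'rV[R]_n -> 'rV[R]_n -> R)
    (J : 'rV[R]_n -> 'rV[R]_n)
    (Rc : 'rV[R]_n -> 'rV[R]_n -> 'rV[R]_n -> 'rV[R]_n) :
  riemannian_metric g -> almost_hermitian g J -> kaehler_curvature g J Rc ->
  let a := forall x1 x2 x3 x4 x y, RdotR g Rc x1 x2 x3 x4 x y = 0 in
  let b := forall x u v, RdotR g Rc u v v u x (J x) = 0 in
  let c := forall x y u, RdotR g Rc u (J u) (J u) u x y = 0 in
  let d := forall x u, RdotR g Rc u (J u) (J u) u x (J x) = 0 in
  [/\ a <-> b, a <-> c & a <-> d].
Proof. move=> Hg HJ HR; exact: (@main_sec R n g J Rc Hg HJ HR). Qed.
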